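(* Let $K\ge 2$ and $M\ge 1$ be integers. For $m\in[M]$ let $\boldsymbol{A}_m\in\mathbb{R}^{K\times K}$ be a confusion matrix (entrywise nonnegative, each column summing to one), let $\boldsymbol{\lambda}\in\mathbb{R}^K$ be a probability vector, $\boldsymbol{D}=\mathrm{Diag}(\boldsymbol{\lambda})$, and set $$\boldsymbol{H}=[\boldsymbol{A}_1^{\top},\ldots,\boldsymbol{A}_M^{\top}]^{\top}\boldsymbol{D}^{1/2}\in\mathbb{R}^{MK\times K},\qquad \boldsymbol{X}=\boldsymbol{H}\boldsymbol{H}^{\top},$$ i.e. $\boldsymbol{X}$ is the $MK\times MK$ block matrix whose $(m,j)$-th $K\times K$ block is $\boldsymbol{R}_{m,j}=\boldsymbol{A}_m\boldsymbol{D}\boldsymbol{A}_j^{\top}$ for all $m,j\in[M]$. Assume that $\boldsymbol{H}$ satisfies the sufficiently scattered condition (SSC), that $\mathrm{rank}(\boldsymbol{H})=K$, and that $\boldsymbol{X}$ is available. Then all the confusion matrices and the prior are identified uniquely by symmetric nonnegative matrix factorization of $\boldsymbol{X}$ up to a common column permutation: for any $\boldsymbol{H}^\star\in\mathbb{R}^{MK\times K}$ with $\boldsymbol{H}^\star\ge\boldsymbol{0}$ and $\boldsymbol{X}=\boldsymbol{H}^\star(\boldsymbol{H}^\star)^{\top}$, there is a permutation matrix $\boldsymbol{\Pi}$ such that $\boldsymbol{A}_m^\star=\boldsymbol{A}_m\boldsymbol{\Pi}$ for all $m\in[M]$ and $\boldsymbol{\lambda}^\star=\boldsymbol{\Pi}^{\top}\boldsymbol{\lambda}$,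 where $\boldsymbol{A}^\star_m$ denotes the $m$-th $K\times K$ row block of $\boldsymbol{H}^\star$ with each column normalized to unit $\ell_1$ norm, and $\boldsymbol{\lambda}^\star$ is the prior estimate obtained from $\boldsymbol{H}^\star$, i.e. $\boldsymbol{H}^\star=[(\boldsymbol{A}_1^\star)^{\top},\ldots,(\boldsymbol{A}_M^\star)^{\top}]^{\top}\mathrm{Diag}(\boldsymbol{\lambda}^\star)^{1/2}$.
   Context: Sufficiently scattered condition (SSC): a nonnegative matrix $\boldsymbol{Z}\in\mathbb{R}^{I\times K}_+$ satisfies the SSC if (i) $\mathcal{C}\subseteq \mathrm{cone}(\boldsymbol{Z}^{\top})$, where $\mathcal{C}=\{\boldsymbol{x}\in\mathbb{R}^K:\ \boldsymbol{x}^{\top}\mathbf{1}\ge\sqrt{K-1}\,\|\boldsymbol{x}\|_2\}$ and $\mathrm{cone}(\boldsymbol{Z}^{\top})=\{\boldsymbol{Z}^{\top}\boldsymbol{\theta}:\boldsymbol{\theta}\ge \boldsymbol{0}\}$ is the conic hull of the rows of $\boldsymbol{Z}$; and (ii) $\mathrm{cone}(\boldsymbol{Z}^{\top})\not\subseteq\mathrm{cone}(\boldsymbol{Q})$ for any orthonormal $\boldsymbol{Q}\in\mathbb{R}^{K\times K}$ other than permutation matrices. In the Dawid–Skene model, $\boldsymbol{A}_m(k',k)=\Pr(X_m=k'\mid Y=k)$ is the probability that annotator $m$ outputs label $k'$ when the true label is $k$, and $\boldsymbol{\lambda}(k)=\Pr(Y=k)$. *)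

(* Defs.v *)
From HB Require Import structures.
From mathcomp Require Import all_boot all_order all_algebra all_fingroup.
From mathcomp Require Import reals.
Set Implicit Arguments. Unset Strict Implicit. Unset Printing Implicit Defensive.
Import Order.TTheory GRing.Theory Num.Theory.
Local Open Scope ring_scope.

Section Defs.
Variable R : realType.

(* A is a K x K confusion matrix: A(k',k) = Pr(X = k' | Y = k);
   entrywise nonnegative, each column sums to one. *)
Definition confusion_mx (K : nat) (A : 'M[R]_K) : Prop :=
  (forall i j, 0 <= A i j) /\ (forall j, \sum_i A i j = 1).

Definition prob_vec (K : nat) (l : 'cV[R]_K) : Prop :=
  (forall k, 0 <= l k 0) /\ \sum_k l k 0 = 1.

(* Rows of an (M*K) x K matrix are indexed by pairs (m, k') via mxvec_index m k'
   (a bijection 'I_M * 'I_K -> 'I_(M*K)); the m-th K x K row block. *)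
Definition blk (M K : nat) (H : 'M[R]_(M * K, K)) (m : 'I_M) : 'M[R]_K :=
  \matrix_(k', k) H (mxvec_index m k') k.

Definition stack (M K : nat) (B : 'I_M -> 'M[R]_K) : 'M[R]_(M * K, K) :=
  \matrix_(i, k) (let p := enum_val (cast_ord (esym (mxvec_cast M K)) i) in
                  B p.1 p.2 k).

Definition Dhalf (K : nat) (l : 'cV[R]_K) : 'M[R]_K :=
  diag_mx (\row_k Num.sqrt (l k 0)).

Definition Hmat (M K : nat) (A : 'I_M -> 'M[R]_K) (l : 'cV[R]_K) : 'M[R]_(M * K, K) :=
  stack A *m Dhalf l.

Definition cone_cols (n p : nat) (B : 'M[R]_(n, p)) (x : 'cV[R]_n) : Prop :=
  exists theta : 'cV[R]_p, (forall i, 0 <= theta i 0) /\ x = B *m theta.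

Definition socC (K : nat) (x : 'cV[R]_K) : Prop :=
  Num.sqrt (K.-1)%:R * Num.sqrt (\sum_k x k 0 ^+ 2) <= \sum_k x k 0.

Definition SSC (I K : nat) (Z : 'M[R]_(I, K)) : Prop :=
  (forall x, socC x -> cone_cols Z^T x) /\
  (forall Q : 'M[R]_K, Q *m Q^T = 1%:M ->
     (forall x, cone_cols Z^T x -> cone_cols Q x) -> is_perm_mx Q).

Definition Aest (M K : nat) (Hs : 'M[R]_(M * K, K)) (m : 'I_M) : 'M[R]_K :=
  \matrix_(k', k) (blk Hs m k' k / \sum_k'' `|blk Hs m k'' k|).

(* lambda_star read off from block m of Hs: Hs_m = A*_m Diag(lambda_star)^{1/2},
   so lambda_star(k) = (l1 norm of column k of block m)^2 *)
Definition lamest (M K : nat) (Hs : 'M[R]_(M * K, K)) (m : 'I_M) : 'cV[R]_K :=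
  \col_k ((\sum_k' `|blk Hs m k' k|) ^+ 2).

End Defs.

(* Main.v *)
Require Import Defs.
From HB Require Import structures.
From mathcomp Require Import all_boot all_order all_algebra all_fingroup.
From mathcomp Require Import reals.
Import Order.TTheory GRing.Theory Num.Theory.
Local Open Scope ring_scope.

Lemma mxEET0 (R : realType) m n (E : 'M[R]_(m, n)) : E *m E^T = 0 -> E = 0.
Proof.
move=> h; apply/matrixP=> i j; rewrite mxE.
have : (E *m E^T) i i = 0 by rewrite h mxE.
rewrite mxE => h2.
have hn : forall k, xpredT k -> 0 <= E i k * E^T k i.
  by move=> k _; rewrite mxE -expr2 sqr_ge0.
have := psumr_eq0P hn h2 (isT : xpredT j).
rewrite mxE -expr2 => /eqP; rewrite sqrf_eq0; exact/eqP.
Qed.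

Lemma stackE (R : realType) M K (B : 'I_M -> 'M[R]_K) m k' k :
  stack B (mxvec_index m k') k = B m k' k.
Proof. by rewrite mxE /mxvec_index cast_ordK enum_rankK. Qed.

Lemma mulpermE (R : realType) m n (B : 'M[R]_(m, n)) (s : 'S_n) i j :
  (B *m perm_mx s) i j = B i (s^-1 j)%g.
Proof. by rewrite -[s in perm_mx s]invgK -col_permE mxE. Qed.

Theorem proposition1 (R : realType) (K M : nat) (A : 'I_M -> 'M[R]_K)
    (lam : 'cV[R]_K) :
  (2 <= K)%N -> (1 <= M)%N ->
  (forall m, confusion_mx (A m)) -> prob_vec lam ->
  SSC (Hmat A lam) -> \rank (Hmat A lam) = K ->
  forall Hs : 'M[R]_(M * K, K),
    (forall i k, 0 <= Hs i k) ->
    Hs *m Hs^T = Hmat A lam *m (Hmat A lam)^T ->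
    exists s : 'S_K,
      (forall m, Aest Hs m = A m *m perm_mx s) /\
      (forall m, lamest Hs m = (perm_mx s)^T *m lam).
Proof.
move=> _ _ hA [lam0 _] [_ ssc] rk Hs Hs0 hX.
set H := Hmat A lam in ssc rk hX.
have rf : row_full H by rewrite /row_full rk.
case/row_fullP: rf => L hL.
set Q := L *m Hs.
have hHQ : H *m Q = Hs.
  set P := 1%:M - H *m L.
  have PH : P *m H = 0 by rewrite mulmxBl mul1mx -mulmxA hL mulmx1 subrr.
  have hE : Hs - H *m Q = P *m Hs by rewrite /Q mulmxBl mul1mx mulmxA.
  apply/eqP; rewrite eq_sym -subr_eq0; apply/eqP; apply: mxEET0.
  rewrite hE trmx_mul mulmxA -(mulmxA P) hX mulmxA PH !mul0mx.
  by [].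
have hQQ : Q *m Q^T = 1%:M.
  rewrite /Q trmx_mul mulmxA -(mulmxA L) hX mulmxA hL mul1mx -trmx_mul hL.
  by rewrite trmx1.
have cone : forall x, cone_cols H^T x -> cone_cols Q x.
  move=> x [th [th0 ->]]; exists (Q^T *m (H^T *m th)); split.
    move=> i; rewrite mulmxA -trmx_mul hHQ mxE.
    by apply: sumr_ge0 => k _; rewrite mxE mulr_ge0.
  by rewrite mulmxA hQQ mul1mx.
case/is_perm_mxP: (ssc Q hQQ cone) => s hs.
have hHs : Hs = H *m perm_mx s by rewrite -hHQ hs.
have hH : forall i k, H i k = stack A i k * Num.sqrt (lam k 0).
  by move=> i k; rewrite /H /Hmat /Dhalf mul_mx_diag !mxE.
have hpos : forall k, lam k 0 != 0.
  move=> k; apply/negP => /eqP l0.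
  have : (L *m H) k k = 1 by rewrite hL mxE eqxx.
  rewrite mxE big1 => [/eqP|i _]; first by rewrite eq_sym oner_eq0.
  by rewrite hH l0 sqrtr0 !mulr0.
have sq0 : forall k, Num.sqrt (lam k 0) != 0.
  by move=> k; rewrite sqrtr_eq0 -ltNge lt0r hpos lam0.
have hblk : forall m k' k,
    blk Hs m k' k = A m k' (s^-1 k)%g * Num.sqrt (lam (s^-1 k)%g 0).
  by move=> m k' k; rewrite mxE hHs mulpermE hH stackE.
have hsum : forall m k,
    \sum_k' `|blk Hs m k' k| = Num.sqrt (lam (s^-1 k)%g 0).
  move=> m k.
  under eq_bigr => k' _ do rewrite hblk ger0_norm ?mulr_ge0 ?sqrtr_ge0 ?(proj1 (hA m)) //.
  by rewrite -mulr_suml (proj2 (hA m)) mul1r.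
exists s; split=> m; apply/matrixP => i j.
  by rewrite mxE hsum hblk mulpermE mulfK.
rewrite mxE hsum sqr_sqrtr // tr_perm_mx -row_permE mxE.
by rewrite (ord1 j).
Qed.
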